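(* For any odd prime $p$ and any non-negative integer $k$, \[ B^{(-k)}_{p-1}\equiv\begin{cases}1\pmod p & \text{if } k=0 \text{ or } k\not\equiv 0\pmod{p-1},\\ 2\pmod p & \text{if } k\neq 0 \text{ and } k\equiv 0\pmod{p-1}.\end{cases} \]
   Context: For any integer $k$, let $\mathrm{Li}_k(t)=\sum_{n=1}^{\infty} t^n/n^k$. The poly-Bernoulli numbers $B^{(k)}_n$ ($n\ge 0$) are defined by $\frac{\mathrm{Li}_k(1-e^{-t})}{1-e^{-t}}=\sum_{n=0}^{\infty}B^{(k)}_n\frac{t^n}{n!}$. For non-positive upper index these are integers. *)

(* Defs.v *)
From mathcomp Require Import all_boot all_order all_algebra.
Set Implicit Arguments. Unset Strict Implicit. Unset Printing Implicit Defensive.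
Import Order.TTheory GRing.Theory Num.Theory.
Local Open Scope ring_scope.

(* Poly-Bernoulli numbers with non-positive upper index -k, defined from the
   generating function  Li_{-k}(1-e^{-t})/(1-e^{-t}) = sum_n B_n^{(-k)} t^n/n!,
   computed as formal power series over rat, truncated at degree n.
   Li_{-k}(x)/x = sum_{m>=0} (m+1)^k x^m as a formal power series, and we
   substitute x := 1 - e^{-t}, which has zero constant term, so only the terms
   m <= n and the exponential's terms of degree <= n affect the coefficient
   of t^n. *)

Definition expneg_trunc (N : nat) : {poly rat} :=
  \poly_(j < N.+1) ((-1) ^+ j / (j`!)%:R).

Definition polyB_gf_trunc (k N : nat) : {poly rat} :=
  \sum_(m < N.+1) ((m.+1 ^ k)%N)%:R *: (1 - expneg_trunc N) ^+ m.

Definition polyBernoulli_neg (k n : nat) : rat :=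
  (n`!)%:R * (polyB_gf_trunc k n)`_n.

(* Main.v *)
Require Import Defs.
From mathcomp Require Import all_boot all_order all_algebra all_field.
From mathcomp Require Import ring zify.
Import Order.TTheory GRing.Theory Num.Theory.
Local Open Scope ring_scope.

Lemma coefEj (N j d : nat) : (d <= N)%N ->
  ((expneg_trunc N)^+j)`_d = (- j%:R)^+d / (d`!)%:R :> rat.
Proof.
elim: j d => [|j IH] d hd.
  rewrite expr0 coefC oppr0 expr0n; case: d hd => [|d] _ /=; first by rewrite divr1.
  by rewrite mul0r.
rewrite exprSr coefM.
have -> : (- (j.+1)%:R) ^+ d =
   \sum_(i < d.+1) ((-1) ^+ (d - i) * (- j%:R) ^+ i *+ 'C(d, i)) :> rat.
  by rewrite -exprDn addrC -opprD -natr1 addrC.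
rewrite mulr_suml; apply: eq_bigr => [[i hi]] _ /=.
rewrite IH; last by apply: leq_trans hd; rewrite -ltnS.
rewrite /expneg_trunc coef_poly ifT; last by rewrite ltnS (leq_trans (leq_subr _ _) hd).
have hf : (d`!)%:R = ('C(d, i))%:R * ((i`!)%:R * ((d - i)`!)%:R) :> rat.
  by rewrite -!natrM bin_fact.
have h1 : (i`!)%:R != 0 :> rat by rewrite pnatr_eq0 -lt0n fact_gt0.
have h2 : ((d-i)`!)%:R != 0 :> rat by rewrite pnatr_eq0 -lt0n fact_gt0.
have h3 : ('C(d,i))%:R != 0 :> rat by rewrite pnatr_eq0 -lt0n bin_gt0.
rewrite hf -mulr_natr; field; rewrite h1 h2 h3 //.
Qed.

Lemma aux_cancel (F : fieldType) (c x y : F) (n : nat) : c != 0 ->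
  c * (x * (y / c) *+ n) = (x * y) *+ n.
Proof.
move=> hc; rewrite -[RHS]mulrnAr -mulrnAr mulrCA; congr (x * _).
by rewrite -mulrnAl mulrCA divff // mulr1.
Qed.

Definition zsum (R : comNzRingType) (k N : nat) : R :=
  \sum_(m < N.+1) ((m.+1 ^ k)%N)%:R *
     \sum_(j < m.+1) ((-1) ^+ j * (- (j%:R)) ^+ N) *+ 'C(m, j).

Lemma B_eq k N : polyBernoulli_neg k N = zsum rat k N.
Proof.
rewrite /polyBernoulli_neg /polyB_gf_trunc /zsum coef_sum mulr_sumr.
apply: eq_bigr => [[m hm]] _ /=.
rewrite coefZ exprDn coef_sum mulrCA mulr_sumr; congr (_ * _).
apply: eq_bigr => [[j hj]] _ /=.
rewrite coefMn expr1n mul1r -scaleN1r exprZn coefZ coefEj //.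
have h1 : (N`!)%:R != 0 :> rat by rewrite pnatr_eq0 -lt0n fact_gt0.
exact: aux_cancel.
Qed.

Lemma zsum_int (R : comNzRingType) k N : (zsum int k N)%:~R = zsum R k N.
Proof.
rewrite /zsum rmorph_sum; apply: eq_bigr => m _.
rewrite rmorphM rmorph_sum /= mulrz_nat; congr (_ * _); apply: eq_bigr => j _.
by rewrite rmorphMn rmorphM !rmorphXn !rmorphN /= mulrz_nat rmorph1.
Qed.

Section Fp.
Variable p : nat.
Hypothesis hp : prime p.
Local Notation F := 'F_p.

Lemma fermatF (x : F) : x != 0 -> x ^+ p.-1 = 1.
Proof.
move=> hx; have := expf_card x; rewrite card_Fp //.
have -> : x ^+ p = x * x ^+ p.-1 by rewrite -exprS prednK // prime_gt0.
move=> h; apply: (mulfI hx); rewrite mulr1; exact h.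
Qed.

Lemma natF_neq0 j : (0 < j < p)%N -> (j%:R : F) != 0.
Proof.
case/andP=> hj0 hjp; apply/eqP => h; have := congr1 (@nat_of_ord _) h.
rewrite (val_Fp_nat hp) modn_small //= => h0; by rewrite h0 in hj0.
Qed.

Lemma sum_all (k : nat) :
  \sum_(i < p) ((i%:R : F) ^+ k) = \sum_(x : F) x ^+ k.
Proof.
have e : (Zp_trunc (pdiv p)).+2 = p by rewrite Fp_cast.
have -> : \sum_(x : F) x ^+ k = \sum_(i < (Zp_trunc (pdiv p)).+2) ((i%:R : F) ^+ k).
  by apply: eq_bigr => x _; rewrite natr_Zp.
rewrite -!(big_mkord xpredT (fun i => (i%:R : F) ^+ k)).
by move: ((Zp_trunc (pdiv p)).+2) e => n ->.
Qed.

End Fp.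

Section Fp2.
Variable p : nat.
Hypothesis hp : prime p.
Hypothesis hodd : odd p.
Local Notation F := 'F_p.
Local Notation N := p.-1.

Lemma hpN : p = N.+1.
Proof. by rewrite prednK // prime_gt0. Qed.

Lemma hN0 : (0 < N)%N.
Proof. by have := prime_gt1 hp; rewrite {1}hpN. Qed.

Lemma hNeven : odd N = false.
Proof. by have := hodd; rewrite {1}hpN /= => /negbTE. Qed.

Lemma inner_sum m : (m <= N)%N ->
  \sum_(j < m.+1) ((-1) ^+ j * (- (j%:R : F)) ^+ N) *+ 'C(m, j) = 0 ^+ m - 1.
Proof.
move=> hm.
have -> : (0 : F) ^+ m = (1 + -1) ^+ m by rewrite subrr.
rewrite exprDn !big_ord_recl /= oppr0 expr0n eqn0Ngt hN0 /= mulr0 mul0rn add0r.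
rewrite !expr0 expr1n !mulr1 bin0 mulr1n [RHS]addrC addKr.
have eN : (-1) ^+ N = 1 :> F by rewrite -signr_odd hNeven.
apply: eq_bigr => [[i hi]] _ /=.
rewrite [(- _) ^+ N]exprNn eN mul1r fermatF // ?expr1n ?mul1r ?mulr1 //.
apply: natF_neq0 => //=; rewrite /bump /=; lia.
Qed.

End Fp2.

Section Fp3.
Variable p : nat.
Hypothesis hp : prime p.
Hypothesis hodd : odd p.
Local Notation F := 'F_p.
Local Notation N := p.-1.

Lemma sum_bound (G : nat -> F) n1 n2 : n1 = n2 ->
  \sum_(i < n1) G i = \sum_(i < n2) G i.
Proof. by move=> ->. Qed.

Lemma zsumF k : zsum F k N = 1 - \sum_(i < p) (i%:R : F) ^+ k.
Proof.
rewrite /zsum.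
transitivity (\sum_(m < N.+1) ((m.+1 ^ k)%N%:R * ((0 : F) ^+ m - 1))).
  by apply: eq_bigr => [[m hm]] _ /=; rewrite inner_sum.
rewrite big_ord_recl /= expr0 subrr mulr0 add0r.
have -> : \sum_(i < N) (((bump 0 i).+1 ^ k)%N%:R * ((0 : F) ^+ bump 0 i - 1))
   = - \sum_(i < N) ((i.+2)%:R : F) ^+ k.
  rewrite -sumrN; apply: eq_bigr => i _.
  by rewrite /bump /= add1n expr0n /= sub0r mulrN1 natrX.
set X := \sum_(i < N) _.
rewrite (@sum_bound (fun i => (i%:R : F) ^+ k) _ _ (hpN p hp)) big_ord_recl /=.
set Y := \sum_(i < N) _.
have e0 : ((N.+1)%:R : F) = 0 by rewrite -(hpN p hp) pchar_Fp_0.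
have eT : Y + 0 ^+ k = 1 + X.
  rewrite -e0 /Y /X /bump /=.
  rewrite -(big_ord_recr N (fun i => ((i.+1)%:R : F) ^+ k)) big_ord_recl /= expr1n.
  done.
have eY : Y = 1 + X - 0 ^+ k by rewrite -eT addrK.
rewrite eY; ring.
Qed.
End Fp3.

Section Fp4.
Variable p : nat.
Hypothesis hp : prime p.
Hypothesis hodd : odd p.
Local Notation F := 'F_p.
Local Notation N := p.-1.

Lemma S_k0 : \sum_(i < p) (i%:R : F) ^+ 0 = 0.
Proof.
rewrite (eq_bigr (fun _ => 1)); last by move=> i _; rewrite expr0.
by rewrite sumr_const card_ord pchar_Fp_0.
Qed.

Lemma S_div k : (0 < k)%N -> (N %| k)%N -> \sum_(i < p) (i%:R : F) ^+ k = -1.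
Proof.
move=> hk /dvdnP [q hq].
rewrite (@sum_bound p (fun i => (i%:R : F) ^+ k) _ _ (hpN p hp)) big_ord_recl /=.
rewrite expr0n eqn0Ngt hk /= add0r.
rewrite (eq_bigr (fun _ => 1)); last first.
  move=> i _; rewrite hq mulnC exprM fermatF ?expr1n //.
  apply: natF_neq0 => //; rewrite /bump /=.
  have := ltn_ord i; have := prime_gt1 hp; lia.
rewrite sumr_const card_ord.
have e0 : ((N.+1)%:R : F) = 0 by rewrite -(hpN p hp) pchar_Fp_0.
by apply/eqP; rewrite -addr_eq0 natr1 e0.
Qed.

Lemma S_nondiv k : ~~ (N %| k)%N -> \sum_(i < p) (i%:R : F) ^+ k = 0.
Proof.
move=> hnd; rewrite sum_all //.
have hN0' : (0 < N)%N by apply: hN0.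
have [g /andP [hg hgk]] : exists g : F, (g != 0) && (g ^+ k != 1).
  apply/existsP; apply: contraT; rewrite negb_exists => /forallP H.
  have Hr : forall x : F, x != 0 -> x ^+ (k %% N) == 1.
    move=> x hx; have := H x; rewrite hx /= negbK => /eqP hk.
    rewrite (div.divn_eq k N) exprD (mulnC (k %/ N)%N) exprM fermatF // expr1n mul1r in hk.
    by rewrite hk.
  have hr0 : (0 < (k %% N)%N)%N by rewrite lt0n; move: hnd; rewrite /dvdn.
  have := @max_unity_roots _ (k %% N)%N (enum (predC1 (0 : F))) hr0.
  rewrite enum_uniq -cardE cardC1 card_Fp // => /(_ _ isT).
  rewrite leqNgt ltn_pmod //=; apply.
  by apply/allP => x; rewrite mem_enum /= => hx; rewrite unity_rootE Hr.
set T := \sum_(x : F) _.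
have hT : T = g ^+ k * T.
  rewrite {1}/T (reindex_inj (mulfI hg)) /= mulr_sumr.
  by apply: eq_bigr => x _; rewrite exprMn.
have : (g ^+ k - 1) * T = 0 by rewrite mulrBl mul1r -hT subrr.
move/eqP; rewrite mulf_eq0 => /orP [|/eqP //]; by rewrite subr_eq0 (negbTE hgk).
Qed.

End Fp4.

Theorem theorem3p1 (p k : nat) (hp : prime p) (hodd : odd p) :
  exists z : int,
    polyBernoulli_neg k p.-1 = z%:~R /\
    (z = (if (k == 0)%N || (k %% p.-1 != 0)%N then 1 else 2) %[mod p%:Z])%Z.
Proof.
exists (zsum int k p.-1); split; first by rewrite B_eq zsum_int.
apply/eqP; rewrite eqz_mod_dvd (dvdz_pcharf (pchar_Fp hp)) rmorphB /=.
rewrite (zsum_int 'F_p) zsumF //.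
case: (posnP k) => [->|hk].
  by rewrite S_k0 //=; apply/eqP; rewrite mulr1z; ring.
have hk0 : (k == 0)%N = false by rewrite eqn0Ngt hk.
case: ifP => /= hd.
  rewrite S_nondiv //; apply/eqP; rewrite mulr1z; ring.
rewrite S_div //; last by rewrite /dvdn; move/negbFE: hd.
apply/eqP; rewrite -[2%Z]/(2%N%:Z) -pmulrn; ring.
Qed.
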